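(* Let $\mathbb O=\{0,1,\dots,M\}$ with integer $M\ge1$, and $\theta=0$. For every $x(0)\in\mathbb O^n$: if there exists a finite legal update sequence from $x(0)$ along which the trajectory reaches the consensus state $(0,\dots,0)$, then there exists a finite legal update sequence from $x(0)$ along which the system reaches a state $y$ (not necessarily an equilibrium) with $y_i=1$ for every $i$ with $x_i(0)>0$.
   Context: Let $n\ge1$, $\mathcal V=\{1,\dots,n\}$, and let $W=(w_{ij})$ be an $n\times n$ row-stochastic matrix. For $x\in\mathbb O^n$, $i\in\mathcal V$, $z\in\mathbb O$, define $C^i_{\mathrm{social}}(z;x)=\sum_{j=1}^n w_{ij}|z-x_j|$ and $P_i(x)=\{z\in\mathbb O: C^i_{\mathrm{social}}(z;x)\le C^i_{\mathrm{social}}(x_i;x),\ |z-\theta|\le |x_i-\theta|\}$. A legal update sequence from $x(0)$ is a finite sequence $(i_1,z_1),\dots,(i_T,z_T)$ with $i_t\in\mathcal V$, generating $x(1),\dots,x(T)$ where $x(t)$ is obtained from $x(t-1)$ by setting coordinate $i_t$ to $z_t$, such that $z_t\in P_{i_t}(x(t-1))$ for every $t$. *)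

(* Defs.v *)
From HB Require Import structures.
From mathcomp Require Import all_boot all_order all_algebra.
Set Implicit Arguments. Unset Strict Implicit. Unset Printing Implicit Defensive.
Import Order.TTheory GRing.Theory Num.Theory.
Local Open Scope ring_scope.

(* Opinion space O = {0,...,M} is 'I_M.+1; a state x in O^n is a function 'I_n -> 'I_M.+1. *)

Definition odist (R : numDomainType) (a b : nat) : R := `|(a%:R : R) - b%:R|.

Definition row_stochastic (R : numDomainType) (n : nat) (W : 'M[R]_n) : Prop :=
  (forall i j, 0 <= W i j) /\ (forall i, \sum_(j < n) W i j = 1).

Definition Csocial (R : numDomainType) (n M : nat) (W : 'M[R]_n)
  (x : 'I_n -> 'I_M.+1) (i : 'I_n) (z : 'I_M.+1) : R :=
  \sum_(j < n) W i j * odist R z (x j).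

Definition inP (R : numDomainType) (n M : nat) (W : 'M[R]_n) (theta : 'I_M.+1)
  (x : 'I_n -> 'I_M.+1) (i : 'I_n) (z : 'I_M.+1) : Prop :=
  Csocial W x i z <= Csocial W x i (x i) /\ odist R z theta <= odist R (x i) theta.

Definition upd (n M : nat) (x : 'I_n -> 'I_M.+1) (i : 'I_n) (z : 'I_M.+1)
  : 'I_n -> 'I_M.+1 := fun j => if j == i then z else x j.

Fixpoint run (n M : nat) (x : 'I_n -> 'I_M.+1) (s : seq ('I_n * 'I_M.+1))
  : 'I_n -> 'I_M.+1 :=
  match s with
  | [::] => x
  | (i, z) :: s' => run (upd x i z) s'
  end.

Fixpoint legal (R : numDomainType) (n M : nat) (W : 'M[R]_n) (theta : 'I_M.+1)
  (x : 'I_n -> 'I_M.+1) (s : seq ('I_n * 'I_M.+1)) : Prop :=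
  match s with
  | [::] => True
  | (i, z) :: s' => inP W theta x i z /\ legal W theta (upd x i z) s'
  end.

Definition reaches (n M : nat) (x : 'I_n -> 'I_M.+1) (s : seq ('I_n * 'I_M.+1))
  (y : 'I_n -> 'I_M.+1) : Prop :=
  exists t : nat, (t <= size s)%N /\ forall i, run x (take t s) i = y i.

(* Main.v *)
Require Import Defs.
From HB Require Import structures.
From mathcomp Require Import all_boot all_order all_algebra.
From mathcomp Require Import ring lra zify.
Import Order.TTheory GRing.Theory Num.Theory.
Local Open Scope ring_scope.

Lemma odist0 (R : numDomainType) (a : nat) : odist R a 0 = a%:R.
Proof. by rewrite /odist subr0 ger0_norm ?ler0n. Qed.

Lemma odist_ge (R : realDomainType) (a b : nat) : (b <= a)%N -> odist R a b = a%:R - b%:R.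
Proof. by move=> h; rewrite /odist ger0_norm // subr_ge0 ler_nat. Qed.

Lemma term_eq (R : realDomainType) (u v xj yj : nat) :
  (1 <= u)%N -> (1 <= v)%N -> (yj = xj \/ (xj = 0%N /\ yj = 1%N)) ->
  odist R v yj - odist R u yj = odist R v xj - odist R u xj.
Proof.
move=> hu hv [->//|[-> ->]].
rewrite !odist_ge //; lra.
Qed.

Lemma term_conv (R : realDomainType) (a x : nat) : (1 <= a)%N ->
  a%:R * odist R 1 x <= (a.-1)%:R * odist R 0 x + odist R a x.
Proof.
case: a => // a _ /=; rewrite /odist.
have e : (a.+1%:R : R) * (1%:R - x%:R) = (a%:R : R) * (0%:R - x%:R) + (a.+1%:R - x%:R).
  rewrite -natr1; ring.
have := ler_normD ((a%:R : R) * (0%:R - x%:R)) (a.+1%:R - x%:R).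
by rewrite -e !normrM (ger0_norm (ler0n _ a.+1)) (ger0_norm (ler0n _ a)).
Qed.

Set Implicit Arguments. Unset Strict Implicit.
Section Main.
Variables (R : realFieldType) (n M : nat) (W : 'M[R]_n) (x0 : 'I_n -> 'I_M.+1).
Hypothesis HM : (1 <= M)%N.
Hypothesis HW : row_stochastic W.

Definition one : 'I_M.+1 := inord 1.
Lemma oneE : nat_of_ord one = 1%N.
Proof. by rewrite /one inordK // ltnS. Qed.

Definition phi (i : 'I_n) (v : 'I_M.+1) : 'I_M.+1 :=
  if (0 < x0 i)%N && (nat_of_ord v == 0)%N then one else v.

Definition f (p : 'I_n * 'I_M.+1) := (p.1, phi p.1 p.2).

Definition Inv (x : 'I_n -> 'I_M.+1) := forall j, nat_of_ord (x0 j) = 0%N -> nat_of_ord (x j) = 0%N.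

Lemma Csub (x y : 'I_n -> 'I_M.+1) i (a b : 'I_M.+1) :
  (forall j, y j = phi j (x j)) -> (1 <= a)%N -> (1 <= b)%N ->
  Csocial W y i b - Csocial W y i a = Csocial W x i b - Csocial W x i a.
Proof.
move=> hy ha hb; rewrite /Csocial -!sumrB; apply: eq_bigr => j _.
rewrite -!mulrBr; congr (_ * _); apply: term_eq => //.
rewrite hy /phi; case: ifP => [/andP[_ /eqP ->]|_]; [right; split => //; exact: oneE | by left].
Qed.

Lemma Cconv (x : 'I_n -> 'I_M.+1) i (a z : 'I_M.+1) :
  (1 <= a)%N -> nat_of_ord z = 0%N ->
  Csocial W x i z <= Csocial W x i a -> Csocial W x i one <= Csocial W x i a.
Proof.
move=> ha hz h.
have ha0 : (0 : R) < (nat_of_ord a)%:R by rewrite ltr0n.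
rewrite -(ler_pM2l ha0).
have h1 : (nat_of_ord a)%:R * Csocial W x i one <=
   ((nat_of_ord a).-1)%:R * Csocial W x i z + Csocial W x i a.
  rewrite /Csocial !mulr_sumr -big_split /=; apply: ler_sum => j _.
  rewrite oneE hz !(mulrCA _ (W i j)) -mulrDr; apply: ler_wpM2l; first by case: HW.
  exact: term_conv.
apply: (le_trans h1).
have -> : ((nat_of_ord a)%:R : R) = ((nat_of_ord a).-1)%:R + 1.
  by case: (nat_of_ord a) ha => // k _; rewrite -natr1.
have : 0 <= (((nat_of_ord a).-1)%:R : R) by [].
move: (Csocial W x i a) (Csocial W x i z) h => A Z h hk.
have := ler_wpM2l hk h; nra.
Qed.

Lemma step (x y : 'I_n -> 'I_M.+1) i z :
  Inv x -> (forall j, y j = phi j (x j)) -> inP W ord0 x i z -> inP W ord0 y i (phi i z).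
Proof.
move=> hI hy [hc ht]; move: ht; rewrite !odist0 ler_nat => hzx.
have [hx0|hx1] := eqVneq (nat_of_ord (x i)) 0%N.
  have ez : z = x i by apply: val_inj => /=; lia.
  by rewrite ez -hy; split.
have hP : (0 < x0 i)%N.
  by case: (posnP (x0 i)) => // /hI; move: hx1 => /eqP.
have hyi : y i = x i by rewrite hy /phi (negPf hx1) andbF.
have hb : (1 <= phi i z)%N by rewrite /phi hP /=; case: eqP => [_|/eqP]; rewrite ?oneE //; lia.
have hxi : (1 <= x i)%N by lia.
split; last first.
  rewrite hyi !odist0 ler_nat /phi hP /=; case: eqP => [_|//]; rewrite oneE; lia.
rewrite hyi -subr_le0 (@Csub x y i (x i) (phi i z) hy hxi hb) subr_le0.
rewrite /phi hP /=; case: eqP => [hz0|//].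
exact: (@Cconv x i (x i) z hxi hz0 hc).
Qed.

Lemma legal_map s : forall x y, Inv x -> (forall j, y j = phi j (x j)) ->
  legal W ord0 x s -> legal W ord0 y (map f s).
Proof.
elim: s => [//|[i z] s IH] x y hI hy /= [hs hl]; split; first exact: (@step x y i z hI hy hs).
apply: (IH (upd x i z)) => //.
- move=> j hj; rewrite /upd; case: eqP => [ej|_]; last exact: hI j hj.
  subst j; move: hs => [_]; rewrite !odist0 ler_nat (hI i hj).
  by rewrite leqn0 => /eqP.
- by move=> j; rewrite /upd /=; case: eqP => [->|_].
Qed.

Lemma run_map s : forall x y, (forall j, y j = phi j (x j)) ->
  forall j, run y (map f s) j = phi j (run x s j).
Proof.
elim: s => [//|[i z] s IH] x y hy j /=; apply: IH => k.
by rewrite /upd /=; case: eqP => [->|_].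
Qed.

Lemma phi_x0 j : phi j (x0 j) = x0 j.
Proof. by rewrite /phi; case: ifP => // /andP[/lt0n_neq0 /negPf ->]. Qed.

End Main.

Theorem corollary2 (R : realFieldType) (n M : nat) (W : 'M[R]_n) :
  (1 <= n)%N -> (1 <= M)%N -> row_stochastic W ->
  forall x0 : 'I_n -> 'I_M.+1,
    (exists s, legal W ord0 x0 s /\ reaches x0 s (fun _ => ord0)) ->
    exists s, legal W ord0 x0 s /\
      exists y : 'I_n -> 'I_M.+1, reaches x0 s y /\
        forall i : 'I_n, (0 < x0 i)%N -> nat_of_ord (y i) = 1%N.
Proof.
move=> hn HM HW x0 [s [hl [t [ht hr]]]].
have hphi : forall j, x0 j = phi x0 j (x0 j) by move=> j; rewrite phi_x0.
exists (map (f x0) s); split.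
  apply: (legal_map HM HW) hl => //; by move=> j ->.
exists (run x0 (take t (map (f x0) s))); split.
  by exists t; rewrite size_map.
move=> i hi; rewrite -map_take (run_map _ hphi) hr /phi hi /=.
exact: oneE.
Qed.
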